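(* Let $G$ be a finite group and $H$ a normal subgroup of $G$ such that $G/H$ is cyclic. Suppose that the cosets $Hx$ and $Hy$ have equal order in the quotient group $G/H$. Then there exists a permutation $\sigma$ of the elements of $G$ such that (1) every subgroup of $G$ is $\sigma$-invariant; (2) for all $g_1,g_2\in G$, $(g_1\sigma)(g_2\sigma)=(g_2\sigma)(g_1\sigma)$ if and only if $g_1g_2=g_2g_1$; (3) $\sigma$ permutes the conjugacy classes of $G$; (4) $(Hx)\sigma = Hy$.
   Context: $g\sigma$ denotes the image of $g$ under $\sigma$. *)

(* Defs.v *)
From mathcomp Require Import all_boot all_fingroup all_solvable.
Set Implicit Arguments. Unset Strict Implicit. Unset Printing Implicit Defensive.

(* Main.v *)
Require Import Defs.
From mathcomp Require Import all_boot all_fingroup all_solvable.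
Set Implicit Arguments. Unset Strict Implicit. Unset Printing Implicit Defensive.
Lemma exists_k (n m k0 : nat) : 0 < n -> m %| n -> coprime m k0 ->
  exists k, coprime n k /\ k = k0 %[mod m].
Proof.
move=> n0 mdn cmk.
have m0 : 0 < m by case: m mdn {cmk} => //; rewrite dvd0n => /eqP n00; rewrite n00 in n0.
set k1 := k0 + m.
have k10 : 0 < k1 by rewrite /k1 addn_gt0 m0 orbT.
have ck1 : coprime m k1 by rewrite /k1 -coprime_modr modnDr coprime_modr.
have ek1 : k1 = k0 %[mod m] by rewrite /k1 modnDr.
pose p := \pi(m).
have cmr : coprime n`_p n`_p^' by apply: coprime_partC.
exists (chinese n`_p n`_p^' k1 1).
have mdm' : m %| n`_p.
  by rewrite -{1}(part_pnat_id (pnat_pi m0)); apply: partn_dvd.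
split.
  rewrite -{1}(partnC p n0) coprime_sym coprimeMr; apply/andP; split.
    rewrite -(coprime_modl _ n`_p) (chinese_modl cmr) coprime_modl coprime_sym.
    apply: (@pnat_coprime p); first exact: part_pnat.
    by rewrite -coprime_pi'.
  by rewrite -(coprime_modl _ n`_p^') (chinese_modr cmr) coprime_modl coprime1n.
by rewrite -(modn_dvdm _ mdm') (chinese_modl cmr) modn_dvdm.
Qed.

Local Open Scope group_scope.

Theorem lemma2p3 (gT : finGroupType) (G H : {group gT}) (x y : gT) :
  H <| G -> cyclic (G / H) -> x \in G -> y \in G ->
  #[coset H x] = #[coset H y] ->
  exists sigma : {perm gT},
    [/\ perm_on G sigma,
        (forall K : {group gT}, K \subset G -> sigma @: K = K),
        (forall g1 g2, g1 \in G -> g2 \in G ->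
           commute (sigma g1) (sigma g2) <-> commute g1 g2),
        (forall C, C \in classes G -> sigma @: C \in classes G)
      & sigma @: (H :* x) = H :* y].
Proof.
move=> nHG cycGH xG yG oxy.
have sGN := normal_norm nHG.
have sHG := normal_sub nHG.
have NxG z : z \in G -> z \in 'N(H) by apply: (subsetP sGN).
set a := coset H x; set b := coset H y.
have aG : a \in G / H by apply: mem_quotient.
have bG : b \in G / H by apply: mem_quotient.
have eab : <[a]> = <[b]>.
  by apply/eqP; rewrite (eq_subG_cyclic cycGH) ?cycle_subG //; apply/eqP; exact: oxy.
have /cycleP[i bi] : b \in <[a]> by rewrite eab cycle_id.
have cai : coprime #[a] i by rewrite -generator_coprime -bi /generator eab.
have [k [ck ek]] := exists_k (cardG_gt0 G)
   (dvdn_trans (order_dvdG aG) (dvdn_quotient _ _)) cai.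
have kK := expgK ck.
pose f g := if g \in G then g ^+ k else g.
have fG g : g \in G -> f g = g ^+ k by rewrite /f => ->.
have fN g : g \notin G -> f g = g by rewrite /f => /negbTE ->.
have fin g : (f g \in G) = (g \in G).
  by rewrite /f; case: ifP => // gG; rewrite groupX.
have finj : injective f.
  move=> g1 g2 e; have := fin g1; rewrite e fin => e12.
  case g1G : (g1 \in G).
    have g2G : g2 \in G by rewrite e12.
    by rewrite -(kK g1) // -(kK g2) // -(fG g1 g1G) -(fG g2 g2G) e.
  have g2G : g2 \notin G by rewrite e12 g1G.
  by rewrite -(fN g1) ?g1G // -(fN g2 g2G) e.
pose s := perm finj.
have sE g : s g = f g by rewrite permE.
exists s; split.
- apply/subsetP => g; rewrite inE sE; apply: contraR => gN.
  by rewrite fN // eqxx.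
- move=> K sKG; apply/eqP; rewrite eqEcard card_imset; last exact: perm_inj.
  rewrite leqnn andbT; apply/subsetP => _ /imsetP[g gK ->].
  by rewrite sE fG ?(subsetP sKG) // groupX.
- move=> g1 g2 g1G g2G; rewrite !sE !fG //; split; last exact: commuteX2.
  by move/(commuteX2 (expg_invn G k) (expg_invn G k)); rewrite !kK.
- move=> C /imsetP[g gG ->].
  have -> : s @: (g ^: G) = (g ^+ k) ^: G.
    rewrite /class -imset_comp; apply: eq_in_imset => z zG /=.
    by rewrite sE fG ?groupJ // conjXg.
  by rewrite mem_classes ?groupX.
apply/eqP; rewrite eqEcard card_imset ?card_rcoset; last exact: perm_inj.
rewrite leqnn andbT; apply/subsetP => _ /imsetP[z /rcosetP[h hH ->] ->].
have hxG : h * x \in G by rewrite groupM // (subsetP sHG).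
rewrite sE fG //; apply/rcoset_kercosetP; rewrite ?NxG ?groupX //.
rewrite morphX ?NxG // [coset_morphism H _]coset_kerl // -/a.
by rewrite -expg_mod_order ek expg_mod_order -bi.
Qed.
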